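(* Let $p$ be an odd prime and $M$ the sub-add move matrix. (a) If $p\equiv3\pmod8$ or $p\equiv7\pmod8$, then $\Gamma_{M,\,p}$ has no secondary cycles. (b) If $p\equiv5\pmod8$, then $\Gamma_{M,\,p}$ has secondary cycles.
   Context: The sub-add move matrix is $M=\begin{pmatrix}1&-1\\1&1\end{pmatrix}$. $\Gamma_{M,\,p}$ is the directed graph with vertex set $\mathbb Z_p^2$ and arcs $((a,b),(a-b,a+b))$ (mod $p$; loops allowed). Let $k$ be the $\mathbb Z_p$-order of $M$ (least positive integer with $M^k\equiv I\pmod p$; it equals $4t$ with $t$ the multiplicative order of $-4$ in $GF(p)$). A directed cycle is a cycle in the underlying undirected graph such that in the induced directed subgraph every vertex has in- and out-degree $1$; a loop is a directed $1$-cycle. A primary cycle is a directed cycle of length $k$; a secondary cycle is a directed cycle that is neither primary nor a $1$-cycle. *)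

(* Defs.v *)
From mathcomp Require Import all_boot all_order all_algebra.
Unset Printing Implicit Defensive.
Import GRing.Theory.
Local Open Scope ring_scope.

Definition subadd (p : nat) : 'M['F_p]_2 :=
  \matrix_(i < 2, j < 2)
     (if i == ord0 then (if j == ord0 then 1 else -1) else 1).

(* Vertices of Gamma_{M,p}: Z_p^2, as column vectors (a;b).
   The unique arc out of v is v -> M v, i.e. (a,b) -> (a-b, a+b). *)
Definition step (p : nat) (v : 'cV['F_p]_2) : 'cV['F_p]_2 := subadd p *m v.

Definition is_Zp_order (p k : nat) : Prop :=
  (0 < k)%N /\ (subadd p) ^+ k = 1 /\
  forall j : nat, (0 < j)%N -> (j < k)%N -> (subadd p) ^+ j <> 1.

(* Its length is size c; loops are directed 1-cycles. *)
Definition directed_cycle (p : nat) (c : seq 'cV['F_p]_2) : Prop :=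
  c <> [::] /\ uniq c /\ fcycle (step p) c.

Definition primary_cycle (p k : nat) (c : seq 'cV['F_p]_2) : Prop :=
  directed_cycle p c /\ size c = k.

Definition secondary_cycle (p k : nat) (c : seq 'cV['F_p]_2) : Prop :=
  directed_cycle p c /\ ~ primary_cycle p k c /\ size c <> 1%N.

(* Main.v *)
Require Import Defs.
From mathcomp Require Import all_boot all_order all_algebra all_solvable all_field.
From mathcomp Require Import zify ring.

Section Helpers.
Import GRing.Theory.
Local Open Scope ring_scope.
Variable p : nat.
Hypothesis pr : prime p.
Hypothesis op : odd p.

Lemma two_neq0 : (2%:R : 'F_p) != 0.
Proof. by rewrite -unitfE (unitFpE pr) coprimen2. Qed.

Lemma m1_neq1 : (-1 : 'F_p) != 1.
Proof.
apply/eqP => h; have := two_neq0; rewrite -[2%:R]/(1 + 1) -{1}h addNr eqxx //.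
Qed.

Lemma fermat (z : 'F_p) : z != 0 -> z ^+ p.-1 = 1.
Proof.
move=> z0; have := expf_card z; rewrite card_Fp //.
rewrite (_ : z ^+ p = z * z ^+ p.-1); last by rewrite -exprS prednK // prime_gt0.
by move=> h; apply: (mulfI z0); rewrite mulr1.
Qed.

Lemma no_sqrt_m1 : (p %% 4 = 3)%N -> forall y : 'F_p, y ^+ 2 <> -1.
Proof.
move=> h y hy.
have y0 : y != 0 by apply/eqP => y0; move: hy; rewrite y0 expr0n /= => /eqP; rewrite eq_sym oppr_eq0 oner_eq0.
have := fermat _ y0.
have -> : p.-1 = (2 * (2 * (p %/ 4) + 1))%N by lia.
rewrite exprM hy exprD exprM sqrrN !expr1n mul1r expr1 => /eqP.
by rewrite (negbTE m1_neq1).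
Qed.

Lemma sqrt_m1 : (p %% 4 = 1)%N -> exists y : 'F_p, y ^+ 2 = -1.
Proof.
move=> h.
pose rs := enum (predC1 (0 : 'F_p)).
have hsz : size rs = p.-1 by rewrite -cardE cardC1 card_Fp.
have : has (p.-1).-primitive_root rs.
  apply: has_prim_root; first by have := prime_gt1 pr; lia.
  - apply/allP => z; rewrite mem_enum /= => z0; rewrite unity_rootE fermat //.
  - exact: enum_uniq.
  - by rewrite hsz.
case/hasP => g _ pg.
exists (g ^+ (p %/ 4)).
have e1 : (g ^+ (p %/ 4)) ^+ 2 ^+ 2 = 1.
  rewrite -!exprM; have -> : (p %/ 4 * (2 * 2) = p.-1)%N by lia.
  exact: prim_expr_order pg.
have e2 : (g ^+ (p %/ 4)) ^+ 2 != 1.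
  rewrite -exprM -(prim_order_dvd pg); have := prime_gt1 pr => p1; apply/negP => /dvdn_leq; lia.
move: e1 e2; move: (g ^+ (p %/ 4) ^+ 2) => z e1 e2.
have : (z - 1) * (z + 1) == 0 by rewrite -subr_sqr e1 expr1n subrr.
rewrite mulf_eq0 subr_eq0 (negbTE e2) /= addr_eq0 => /eqP //.
Qed.

End Helpers.

Lemma cyc_props (T : eqType) (f : T -> T) (c : seq T) :
  c <> [::] -> uniq c -> fcycle f c ->
  exists v, iter (size c) f v = v /\
    forall j, (0 < j < size c)%N -> iter j f v != v.
Proof.
case: c => [//|v s] _ u /= hp; exists v.
have e := fpathE hp; rewrite size_rcons in e.
split.
  by rewrite -[RHS](last_rcons v s v) e last_traject.
move=> j /andP [j0 js].
have h := @nth_uniq _ v (v :: s) 0 j (ltn0Sn (size s)) js u.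
case: j j0 js h => [//|j] _; rewrite ltnS => js /= h.
have e2 : nth v (rcons s v) j = nth v s j by rewrite nth_rcons js.
rewrite -e2 e (set_nth_default (f v)) ?size_traject ?ltnS 1?ltnW // in h.
rewrite nth_traject 1?ltnW // -iterSr in h.
by apply/negbT; rewrite eq_sym; exact: h.
Qed.

Section Gen.
Import GRing.Theory.
Local Open Scope ring_scope.

Lemma key_sq (R : idomainType) (a b v0 v1 : R) :
  a * v0 - b * v1 = v0 -> b * v0 + a * v1 = v1 -> (v0 != 0) || (v1 != 0) ->
  (a - 1) ^+ 2 + b ^+ 2 = 0.
Proof.
move=> h0 h1 nz.
have e0 : ((a-1)^+2 + b^+2) * v0 = (a-1)*(a*v0 - b*v1 - v0) + b*(b*v0 + a*v1 - v1) by ring.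
have e1 : ((a-1)^+2 + b^+2) * v1 = (a-1)*(b*v0 + a*v1 - v1) - b*(a*v0 - b*v1 - v0) by ring.
rewrite h0 h1 !subrr !mulr0 ?addr0 ?subr0 in e0 e1.
move/eqP: e0; move/eqP: e1; rewrite !mulf_eq0.
case/orP: nz => /negbTE ->; rewrite ?orbF.
  by move=> _ /eqP.
by move=> /eqP.
Qed.

Lemma sq_sum0 (F : fieldType) (g b : F) :
  (forall y : F, y ^+ 2 <> -1) -> g ^+ 2 + b ^+ 2 = 0 -> g = 0 /\ b = 0.
Proof.
move=> ns h.
have [b0 | bn0] := eqVneq b 0.
  move: h; rewrite b0 expr0n addr0 => /eqP; rewrite expf_eq0 /= => /eqP; by [].
exfalso; apply: (ns (g / b)).
rewrite expr_div_n; apply: (mulIf (expf_neq0 2 bn0)).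
rewrite divfK ?expf_neq0 //; apply/eqP; rewrite mulN1r -addr_eq0; exact/eqP.
Qed.

Lemma eig_row1 (R : comRingType) (y : R) : y ^+ 2 = -1 -> 1 + y = (1 - y) * y.
Proof.
move=> hy; have e : (1 - y) * y = 1 + y - (y ^+ 2 + 1) by ring.
by rewrite e hy addNr subr0.
Qed.

Lemma pm_pow (R : comRingType) (y : R) (m : nat) : y ^+ 2 = -1 -> odd m ->
  (1 - y) ^+ (2 * m) = - (1 + y) ^+ (2 * m).
Proof.
move=> hy om.
have e : (1 - y) ^+ 2 = - (1 + y) ^+ 2 + 2%:R * (y ^+ 2 + 1) by ring.
rewrite hy addNr mulr0 addr0 in e.
by rewrite !exprM e exprNn -signr_odd om expr1 mulN1r.
Qed.

End Gen.

Section Mat.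
Import GRing.Theory.
Local Open Scope ring_scope.
Variable p : nat.

Definition cm (a b : 'F_p) : 'M['F_p]_2 :=
  \matrix_(i < 2, j < 2) (if i == j then a else if i == ord0 then - b else b).

Lemma subadd_cm : subadd p = cm 1 1.
Proof.
apply/matrixP => i j; rewrite !mxE.
by case: i => [[|[|//]] ?]; case: j => [[|[|//]] ?].
Qed.

Lemma cm_mul a b c d : cm a b *m cm c d = cm (a * c - b * d) (a * d + b * c).
Proof.
apply/matrixP => i j; rewrite !mxE !big_ord_recl big_ord0 !mxE.
case: i => [[|[|//]] ?]; case: j => [[|[|//]] ?] /=; rewrite addr0 ?mulrN ?mulNr ?opprD //; exact: addrC.
Qed.

Lemma cm10 : cm 1 0 = 1.
Proof.
apply/matrixP => i j; rewrite !mxE.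
by case: i => [[|[|//]] ?]; case: j => [[|[|//]] ?] //=; rewrite oppr0.
Qed.

Lemma pow_cm n : exists a b, subadd p ^+ n = cm a b.
Proof.
elim: n => [|n [a [b IH]]]; first by exists 1, 0; rewrite expr0 cm10.
exists (a * 1 - b * 1), (a * 1 + b * 1).
by rewrite exprSr IH subadd_cm -mulmxE cm_mul.
Qed.

Lemma cm_v0 a b (v : 'cV['F_p]_2) :
  (cm a b *m v) ord0 0 = a * v ord0 0 - b * v ord_max 0.
Proof.
rewrite !mxE !big_ord_recl big_ord0 !mxE /= addr0 ?mulNr.
by have -> : lift ord0 ord0 = ord_max :> 'I_2 by apply: val_inj.
Qed.

Lemma cm_v1 a b (v : 'cV['F_p]_2) :
  (cm a b *m v) ord_max 0 = b * v ord0 0 + a * v ord_max 0.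
Proof.
rewrite !mxE !big_ord_recl big_ord0 !mxE /= addr0 ?mulNr.
by have -> : lift ord0 ord0 = ord_max :> 'I_2 by apply: val_inj.
Qed.

Lemma cv_eq0 (v : 'cV['F_p]_2) : v ord0 0 = 0 -> v ord_max 0 = 0 -> v = 0.
Proof.
move=> h0 h1; apply/matrixP => i j; rewrite !mxE (ord1 j).
by case: i => [[|[|//]] ?]; [rewrite -h0 | rewrite -h1]; congr (v _ _); apply: val_inj.
Qed.

Lemma iter_step j v : iter j (step p) v = subadd p ^+ j *m v.
Proof.
elim: j => [|j IH]; first by rewrite expr0 mul1mx.
by rewrite iterS IH /step mulmxA exprS.
Qed.

Definition ev (y : 'F_p) : 'cV['F_p]_2 := \col_(i < 2) (if i == ord0 then 1 else y).

Lemma cv_ext (u w : 'cV['F_p]_2) :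
  u ord0 0 = w ord0 0 -> u ord_max 0 = w ord_max 0 -> u = w.
Proof.
move=> h0 h1; apply/eqP; rewrite -subr_eq0; apply/eqP; apply: cv_eq0;
  by rewrite !mxE ?h0 ?h1 subrr.
Qed.

Lemma ev_step y : y ^+ 2 = -1 -> subadd p *m ev y = (1 - y) *: ev y.
Proof.
move=> hy; apply: cv_ext; rewrite subadd_cm ?cm_v0 ?cm_v1 !mxE /= !mul1r ?mulr1 //.
exact: eig_row1.
Qed.

Lemma ev_pow y j : y ^+ 2 = -1 -> subadd p ^+ j *m ev y = (1 - y) ^+ j *: ev y.
Proof.
move=> hy; elim: j => [|j IH]; first by rewrite !expr0 mul1mx scale1r.
by rewrite exprSr -mulmxE -mulmxA ev_step // -scalemxAr IH scalerA -exprS.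
Qed.

End Mat.


Lemma fcycle_traject (T : eqType) (f : T -> T) v n :
  (0 < n)%N -> iter n f v = v -> fcycle f (traject f v n).
Proof.
case: n => // n _ h.
have e : rcons (traject f (f v) n) v = traject f (f v) n.+1
  by rewrite trajectSr -iterSr h.
by rewrite /= e; exact: fpath_traject.
Qed.

Section Main.
Import GRing.Theory.
Local Open Scope ring_scope.

Lemma part_a (p k : nat) : prime p -> odd p -> is_Zp_order p k ->
  (p %% 4 = 3)%N -> forall c : seq 'cV['F_p]_2, ~ secondary_cycle p k c.
Proof.
move=> pr op [k0 [Mk Mkmin]] h4 c [[cn [cu cf]] [nprim n1]].
apply: nprim; split; first by split.
have [v [hv hj]] := cyc_props _ _ _ cn cu cf.
have n0 : (0 < size c)%N by case: (c) cn.
have vn0 : v != 0.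
  apply/eqP => v0; have h1c : (0 < 1 < size c)%N by apply/andP; split => //; lia.
  by have := hj 1%N h1c; rewrite v0 /= /step mulmx0 eqxx.
have [a [b hab]] := pow_cm p (size c).
rewrite iter_step hab in hv.
have h0 := @cm_v0 p a b v; have h1 := @cm_v1 p a b v; rewrite hv in h0 h1.
have nz : (v ord0 0 != 0) || (v ord_max 0 != 0).
  rewrite -negb_and; apply: contra vn0 => /andP[/eqP e0 /eqP e1]; apply/eqP.
  exact: cv_eq0.
have [g0 b0] := sq_sum0 _ _ _ (@no_sqrt_m1 p pr op h4) (key_sq _ _ _ _ _ (esym h0) (esym h1) nz).
have a1 : a = 1 by apply/eqP; rewrite -subr_eq0; apply/eqP.
have M1 : subadd p ^+ size c = 1 by rewrite hab a1 b0 cm10.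
case: (ltngtP (size c) k) => [lt|gt|//].
  by exfalso; exact: (Mkmin (size c) n0 lt M1).
exfalso; have hkc : (0 < k < size c)%N by apply/andP.
by have := hj k hkc; rewrite iter_step Mk mul1mx eqxx.
Qed.

Lemma part_b (p k : nat) : prime p -> odd p -> is_Zp_order p k ->
  (p %% 8 = 5)%N -> exists c : seq 'cV['F_p]_2, secondary_cycle p k c.
Proof.
move=> pr op [k0 [Mk Mkmin]] h5.
have h4 : (p %% 4 = 1)%N by lia.
have [y0 hy0] := @sqrt_m1 p pr op h4.
have p1 := prime_gt1 pr.
set m := (p %/ 4)%N.
have om : odd m.
  have -> : m = (p %/ 8).*2.+1 by rewrite /m; lia.
  by rewrite /= odd_double.
have pw (y : 'F_p) : y ^+ 2 = -1 -> (1 - y) ^+ (2 * m) ^+ 2 = 1.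
  move=> hy; rewrite -exprM (_ : (2 * m * 2 = p.-1)%N); last by rewrite /m; lia.
  have yn : (1 - y) != 0.
    apply/eqP => e.
    have y1 : y = 1 by apply/eqP; rewrite -subr_eq0 -opprB e oppr0.
    by move: hy; rewrite y1 expr1n => /eqP; rewrite eq_sym (negbTE (@m1_neq1 p pr op)).
  exact: (@fermat p pr (1 - y) yn).
have [y [hy hx hb]] : exists y : 'F_p, [/\ y ^+ 2 = -1,
    (1 - y) ^+ (2 * m) = 1 & (1 + y) ^+ (2 * m) = -1].
  have A2 := pw y0 hy0; have pm := pm_pow _ _ _ hy0 om.
  have : ((1 - y0) ^+ (2 * m) - 1) * ((1 - y0) ^+ (2 * m) + 1) == 0.
    by rewrite -subr_sqr A2 expr1n subrr.
  rewrite mulf_eq0 subr_eq0 addr_eq0 => /orP [] /eqP eA.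
    by exists y0; split => //; rewrite -[LHS]opprK -pm eA.
  exists (- y0); split; first by rewrite sqrrN.
    by rewrite opprK -[LHS]opprK -pm eA opprK.
  exact: eA.
have m0 : (0 < 2 * m)%N by rewrite /m; lia.
have [n pn ndv] := prim_order_exists m0 hx.
have n0 := prim_order_gt0 pn.
have itv j : iter j (step p) (ev p y) = (1 - y) ^+ j *: ev p y.
  by rewrite iter_step ev_pow.
exists (traject (step p) (ev p y) n).
rewrite /secondary_cycle /directed_cycle /primary_cycle.
split; [split; [|split] | split].
- by case: (n) n0.
- rewrite -(prednK n0) looping_uniq; apply/negP => /trajectP [i lt e].
  rewrite !itv in e.
  have := congr1 (fun w : 'cV['F_p]_2 => w ord0 0) e; rewrite !mxE /= !mulr1 => /eqP.
  rewrite (eq_prim_root_expr pn) (modn_small (_ : n.-1 < n)%N); last by lia.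
  rewrite (modn_small (_ : i < n)%N); last by lia.
  move=> /eqP; lia.
- by apply: fcycle_traject => //; rewrite itv prim_expr_order // scale1r.
- move=> [_]; rewrite size_traject => nk.
  have := congr1 (fun A => A *m ev p (- y)) Mk.
  rewrite mul1mx ev_pow ?sqrrN // opprK -nk => e.
  have := congr1 (fun w : 'cV['F_p]_2 => w ord0 0) e; rewrite !mxE /= !mulr1 => e1.
  move: hb; rewrite -(divnK ndv) mulnC exprM e1 expr1n => /eqP.
  by rewrite eq_sym (negbTE (@m1_neq1 p pr op)).
- rewrite size_traject => n1.
  have := prim_expr_order pn; rewrite n1 expr1 => e.
  have y0' : y = 0.
    have : (1 - y) - 1 = 0 by rewrite e subrr.
    by rewrite addrC addKr => /eqP; rewrite oppr_eq0 => /eqP.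
  by move: hy; rewrite y0' expr0n /= => /eqP; rewrite eq_sym oppr_eq0 oner_eq0.
Qed.

End Main.

Theorem theorem7p4 (p k : nat) :
  prime p -> odd p -> is_Zp_order p k ->
  ((p %% 8 = 3 \/ p %% 8 = 7)%N ->
     forall c : seq 'cV['F_p]_2, ~ secondary_cycle p k c) /\
  (p %% 8 = 5 ->
     exists c : seq 'cV['F_p]_2, secondary_cycle p k c)%N.
Proof.
move=> pr op hk; split.
  move=> h; apply: part_a => //; lia.
exact: part_b.
Qed.
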